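(* Let $K\in\mathbb{Z}_{>0}$ and let $\{\mathcal{N}_j\}_{j=1}^K$ be a set of $K$ known $n$-qubit quantum channels. Let $\ell:[0,1]\to\mathbb{R}$ be convex and $L$-Lipschitz. There exists an online learning strategy that, when presented sequentially with channel test operators $E_{A,B}^{(t)}$, $t\in\{1,\dots,T\}$, and associated losses $\ell_t(\cdot)=\ell((\cdot)-b_t)$ with $b_t\in[0,1]$, outputs Choi matrix hypotheses of the form $N_{A,B}^{(t)}=\sum_{j=1}^K p_j^{(t)}C(\mathcal{N}_j)$ with $(p_1^{(t)},\dots,p_K^{(t)})$ a probability vector, such that \[ \sum_{t=1}^T \ell_t\big(\mathrm{Tr}[E_{A,B}^{(t)}N_{A,B}^{(t)}]\big) - \sum_{t=1}^T \ell_t\big(\mathrm{Tr}[E_{A,B}^{(t)}C_{A,B}^{\mathcal{N}}]\big) = \mathcal{O}\big(L\sqrt{T\log K}\big) \] for every $\mathcal{N}$ in the convex hull of $\{\mathcal{N}_j\}_{j=1}^K$.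
   Context: $A,B$ are $n$-qubit systems, $d=2^n$. The Choi matrix of a linear map $\mathcal{N}$ is $C(\mathcal{N})=C^{\mathcal{N}}_{A,B}=\sum_{i,j=0}^{d-1}|i\rangle\langle j|\otimes\mathcal{N}(|i\rangle\langle j|)$. A channel test operator is $E_{A,B}\geq0$ with $E_{A,B}\leq\sigma_A\otimes\mathbb{1}_B$ for some density operator $\sigma_A$. In round $t$ the adversary presents $E^{(t)}$, the learner outputs $N^{(t)}$ (depending only on past information) and predicts $\mathrm{Tr}[E^{(t)}N^{(t)}]$, then $b_t$ is revealed. *)

(* Defs.v *)
From HB Require Import structures.
From mathcomp Require Import all_boot all_order all_algebra.
From mathcomp Require Import complex mxtens.
From mathcomp Require Import reals exp.
Set Implicit Arguments. Unset Strict Implicit. Unset Printing Implicit Defensive.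
Import Order.TTheory GRing.Theory Num.Theory.
Local Open Scope ring_scope.

Section QDefs.
Variable R : realType.
Local Notation C := R[i].

Definition adjmx m n (A : 'M[C]_(m, n)) : 'M[C]_(n, m) := (map_mx Num.conj A)^T.

Definition psd m (A : 'M[C]_m) : Prop :=
  adjmx A = A /\ forall v : 'cV[C]_m, 0 <= ((adjmx v) *m A *m v) 0 0.

Definition loewner_le m (A B : 'M[C]_m) : Prop := psd (B - A).

Definition density m (rho : 'M[C]_m) : Prop := psd rho /\ \tr rho = 1.

Definition mxblock_at k d (X : 'M[C]_(k * d)) (a b : 'I_k) : 'M[C]_d :=
  \matrix_(i, j) X (mxtens_index (a, i)) (mxtens_index (b, j)).

(* (id_k (x) Phi)(X) *)
Definition ampliate k d (Phi : 'M[C]_d -> 'M[C]_d) (X : 'M[C]_(k * d)) : 'M[C]_(k * d) :=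
  \sum_(a < k) \sum_(b < k) (delta_mx a b *t Phi (mxblock_at X a b)).

Definition is_channel d (Phi : 'M[C]_d -> 'M[C]_d) : Prop :=
  [/\ (forall (c : C) (X Y : 'M[C]_d), Phi (c *: X + Y) = c *: Phi X + Phi Y),
      (forall (k : nat) (X : 'M[C]_(k * d)), psd X -> psd (ampliate Phi X))
    & (forall X : 'M[C]_d, \tr (Phi X) = \tr X)].

Definition choi d (Phi : 'M[C]_d -> 'M[C]_d) : 'M[C]_(d * d) :=
  \sum_(i < d) \sum_(j < d) (delta_mx i j *t Phi (delta_mx i j)).

Definition test_operator d (E : 'M[C]_(d * d)) : Prop :=
  psd E /\ exists sigma : 'M[C]_d, density sigma /\ loewner_le E (sigma *t (1%:M : 'M[C]_d)).

Definition prob_vec K (p : 'I_K -> R) : Prop :=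
  (forall j, 0 <= p j) /\ \sum_(j < K) p j = 1.

Definition rtr_prod m (E N : 'M[C]_m) : R := complex.Re (\tr (E *m N)).

Definition convex_on (a b : R) (f : R -> R) : Prop :=
  forall x y t, a <= x <= b -> a <= y <= b -> 0 <= t <= 1 ->
    f (t * x + (1 - t) * y) <= t * f x + (1 - t) * f y.

Definition lipschitz_on (a b : R) (L : R) (f : R -> R) : Prop :=
  forall x y, a <= x <= b -> a <= y <= b -> `|f x - f y| <= L * `|x - y|.

End QDefs.

(* Main.v *)
Require Import Defs.
From HB Require Import structures.
From mathcomp Require Import all_boot all_order all_algebra.
From mathcomp Require Import complex mxtens.
From mathcomp Require Import reals exp.
From mathcomp Require Import sesquilinear spectral.
From mathcomp Require Import classical_sets boolp sequences.
From mathcomp Require Import ring lra.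
From Stdlib Require Import ClassicalEpsilon.
Import Order.TTheory GRing.Theory Num.Theory.
Set Implicit Arguments. Unset Strict Implicit. Unset Printing Implicit Defensive.
Local Open Scope ring_scope.

Section Q.
Variable R : realType.
Local Notation C := R[i].

Lemma adjmxE m n (A : 'M[C]_(m, n)) i j : adjmx A i j = Num.conj (A j i).
Proof. by rewrite /adjmx !mxE. Qed.

Lemma adjmxK m n (A : 'M[C]_(m, n)) : adjmx (adjmx A) = A.
Proof. by apply/matrixP=> i j; rewrite !adjmxE conjCK. Qed.

Lemma adjmx_mul m n p (A : 'M[C]_(m, n)) (B : 'M[C]_(n, p)) :
  adjmx (A *m B) = adjmx B *m adjmx A.
Proof.
apply/matrixP=> i j; rewrite adjmxE !mxE rmorph_sum; apply: eq_bigr => k _.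
by rewrite !adjmxE rmorphM mulrC.
Qed.

Lemma adjmx_tC m n (A : 'M[C]_(m, n)) : adjmx A = (A ^t* )%sesqui.
Proof. by apply/matrixP=> i j; rewrite adjmxE !mxE. Qed.

Lemma psd_normal m (A : 'M[C]_m) : psd A -> A \is normalmx.
Proof.
move=> [hA _]; apply/normalmxP; rewrite -adjmx_tC hA //.
Qed.

Lemma quad_entry m (P M : 'M[C]_m) i :
  (P *m M *m (P ^t* )%sesqui) i i
  = (adjmx (col i (P ^t* )%sesqui) *m M *m col i (P ^t* )%sesqui) 0 0.
Proof.
rewrite !mxE; apply: eq_bigr => k _; rewrite !mxE; congr (_ * _).
apply: eq_bigr => l _; rewrite /adjmx !mxE conjCK //.
Qed.

Lemma psd_tr_ge0 m (A B : 'M[C]_m) : psd A -> psd B -> 0 <= \tr (A *m B).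
Proof.
move=> hA hB; have /orthomx_spectralP eA := psd_normal hA.
set P := spectralmx A in eA; set sp := spectral_diag A in eA.
have Pu : P \is unitarymx by exact: spectral_unitarymx.
have PPt : P *m (P ^t* )%sesqui = 1%:M by apply/unitarymxP.
have iP : invmx P = (P ^t* )%sesqui by rewrite invmx_unitary.
have Pun : P \in unitmx by exact: unitarymx_unit.
have PtP : (P ^t* )%sesqui *m P = 1%:M by rewrite -iP mulVmx.
have hD : P *m A *m (P ^t* )%sesqui = diag_mx sp.
  by rewrite eA iP !mulmxA PPt mul1mx -mulmxA PPt mulmx1.
have -> : \tr (A *m B) = \tr (diag_mx sp *m (P *m B *m (P ^t* )%sesqui)).
  by rewrite eA iP -!mulmxA mxtrace_mulC -!mulmxA.
rewrite mul_diag_mx /mxtrace; apply: sumr_ge0 => i _; rewrite mxE.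
apply: mulr_ge0.
  have -> : sp 0 i = (P *m A *m (P ^t* )%sesqui) i i by rewrite hD mxE eqxx mulr1n.
  by rewrite quad_entry; case: hA => _; apply.
by rewrite quad_entry; case: hB => _; apply.
Qed.


Lemma ReD (x y : C) : complex.Re (x + y) = complex.Re x + complex.Re y.
Proof. by case: x => a b; case: y => c e. Qed.
Lemma Re0 : complex.Re (0 : C) = 0. Proof. by []. Qed.
Lemma ReN (x : C) : complex.Re (- x) = - complex.Re x.
Proof. by case: x. Qed.
Lemma Re_sum I (r : seq I) (P : pred I) (F : I -> C) :
  complex.Re (\sum_(i <- r | P i) F i) = \sum_(i <- r | P i) complex.Re (F i).
Proof. exact: (big_morph _ ReD Re0). Qed.
Lemma ReMr (c : R) (z : C) : complex.Re (real_complex R c * z) = c * complex.Re z.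
Proof. by case: z => a b /=; rewrite mul0r subr0. Qed.
Lemma Re1 : complex.Re (1 : C) = 1. Proof. by []. Qed.
Lemma Re_ge0 (z : C) : 0 <= z -> 0 <= complex.Re z.
Proof. by rewrite lecE => /andP[_]. Qed.

Lemma sum_tens m n (F : 'I_(m * n) -> C) :
  \sum_k F k = \sum_(i < m) \sum_(j < n) F (mxtens_index (i, j)).
Proof.
rewrite pair_big /= (reindex (@mxtens_index m n)) /=.
  by apply: eq_bigr => -[i j].
by exists (@mxtens_unindex m n) => k _; rewrite ?mxtens_indexK ?mxtens_unindexK.
Qed.

Lemma tr_tens m n (A : 'M[C]_m) (B : 'M[C]_n) : \tr (A *t B) = \tr A * \tr B.
Proof.
rewrite /mxtrace sum_tens mulr_suml; apply: eq_bigr => i _.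
by rewrite mulr_sumr; apply: eq_bigr => j _; rewrite tensmxE.
Qed.

Lemma tr_delta m (i j : 'I_m) : \tr (delta_mx i j : 'M[C]_m) = (i == j)%:R.
Proof.
rewrite /mxtrace (bigD1 i) //= big1 ?addr0 => [|k nk]; rewrite mxE ?eqxx //.
by rewrite (negbTE nk).
Qed.

Lemma tr_mul_delta m (A : 'M[C]_m) (i j : 'I_m) : \tr (A *m delta_mx i j) = A j i.
Proof.
rewrite /mxtrace (bigD1 j) //= big1 ?addr0 => [|k nk]; rewrite mxE.
  rewrite (bigD1 i) //= big1 ?addr0 => [|l nl]; rewrite mxE ?eqxx ?mulr1 //.
  by rewrite (negbTE nl) mulr0.
by rewrite big1 // => l _; rewrite mxE (negbTE nk) andbF mulr0.
Qed.

Definition omega_vec d : 'cV[C]_(d * d) :=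
  \col_k (((mxtens_unindex k).1 == (mxtens_unindex k).2)%:R).

Lemma psd_rank1 m (u : 'cV[C]_m) : psd (u *m adjmx u).
Proof.
split; first by rewrite adjmx_mul adjmxK.
move=> v; rewrite !mulmxA -mulmxA.
have -> : (adjmx v *m u *m (adjmx u *m v)) 0 0
          = Num.conj ((adjmx u *m v) 0 0) * (adjmx u *m v) 0 0.
  rewrite mxE big_ord1; congr (_ * _).
  by rewrite -adjmxE adjmx_mul adjmxK.
by rewrite mulrC mul_conjC_ge0.
Qed.

Lemma omega_block d (a b : 'I_d) :
  mxblock_at (omega_vec d *m adjmx (omega_vec d)) a b = delta_mx a b.
Proof.
apply/matrixP => i j; rewrite !mxE big_ord1 adjmxE !mxE !mxtens_indexK /=.
rewrite rmorph_nat -natrM mulnb [i == a]eq_sym [j == b]eq_sym //.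
Qed.

Lemma choi_ampl d (N : 'M[C]_d -> 'M[C]_d) :
  choi N = ampliate N (omega_vec d *m adjmx (omega_vec d)).
Proof.
rewrite /choi /ampliate; apply: eq_bigr => a _; apply: eq_bigr => b _.
by rewrite omega_block.
Qed.

Lemma choi_psd d (N : 'M[C]_d -> 'M[C]_d) : is_channel N -> psd (choi N).
Proof. by case=> _ hcp _; rewrite choi_ampl; apply: hcp; apply: psd_rank1. Qed.

Lemma tr_tens_choi d (N : 'M[C]_d -> 'M[C]_d) (s : 'M[C]_d) :
  is_channel N -> \tr ((s *t (1%:M : 'M[C]_d)) *m choi N) = \tr s.
Proof.
case=> _ _ htr; rewrite /choi mulmx_sumr raddf_sum /=.
rewrite [RHS]/mxtrace; apply: eq_bigr => i _.
rewrite mulmx_sumr raddf_sum /=.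
rewrite (bigD1 i) //= big1 ?addr0 => [|j nj].
  by rewrite tensmx_mul mul1mx tr_tens htr tr_delta tr_mul_delta eqxx mulr1.
by rewrite tensmx_mul mul1mx tr_tens htr tr_delta eq_sym (negbTE nj) mulr0.
Qed.

Lemma range_test d (E : 'M[C]_(d * d)) (N : 'M[C]_d -> 'M[C]_d) :
  test_operator E -> is_channel N ->
  0 <= rtr_prod E (choi N) <= 1.
Proof.
move=> [psdE [s [[psds trs] hle]]] hN.
have hC := choi_psd hN.
apply/andP; split; first by apply: Re_ge0; apply: psd_tr_ge0.
have -> : E = (s *t (1%:M : 'M[C]_d)) - ((s *t 1%:M) - E) by rewrite opprB addrC subrK.
rewrite /rtr_prod mulmxBl raddfB /= tr_tens_choi // trs ReD ReN Re1.
rewrite lerBlDr lerDl; apply: Re_ge0; apply: psd_tr_ge0 => //.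
Qed.

Lemma rtr_lin K m (E : 'M[C]_m) (p : 'I_K -> R) (M : 'I_K -> 'M[C]_m) :
  rtr_prod E (\sum_(j < K) real_complex R (p j) *: M j)
  = \sum_(j < K) p j * rtr_prod E (M j).
Proof. rewrite /rtr_prod.
have -> : \tr (E *m \sum_(j < K) real_complex R (p j) *: M j)
          = \sum_(j < K) real_complex R (p j) * \tr (E *m M j).
  rewrite mulmx_sumr /mxtrace; under eq_bigr do rewrite summxE; rewrite exchange_big /=; apply: eq_bigr => j _.
  rewrite mulr_sumr; apply: eq_bigr => i _.
  by rewrite -scalemxAr mxE.
rewrite Re_sum; apply: eq_bigr => j _.
by rewrite ReMr.
Qed.

Lemma tens_sum_scale K m n p q (A : 'M[C]_(m, n)) (c : 'I_K -> C) (B : 'I_K -> 'M[C]_(p, q)) :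
  A *t (\sum_(j < K) c j *: B j) = \sum_(j < K) c j *: (A *t B j).
Proof.
apply/matrixP => i k; rewrite summxE mxE summxE mulr_sumr; apply: eq_bigr => j _.
by rewrite !mxE mulrCA.
Qed.

Lemma choi_lin K d (q : 'I_K -> R) (N : 'I_K -> 'M[C]_d -> 'M[C]_d) :
  choi (fun X => \sum_(j < K) real_complex R (q j) *: N j X)
  = \sum_(j < K) real_complex R (q j) *: choi (N j).
Proof.
rewrite /choi.
under eq_bigr do under eq_bigr do rewrite tens_sum_scale.
under [RHS]eq_bigr do rewrite scaler_sumr.
under [RHS]eq_bigr do under eq_bigr do rewrite scaler_sumr.
rewrite [RHS]exchange_big /=; apply: eq_bigr => a _.
by rewrite [RHS]exchange_big.
Qed.

End Q.
Section O.
Variable R : realType.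

Definition subg (ell : R -> R) (L a s : R) : Prop :=
  `|s| <= L /\ forall c, -1 <= c <= 1 -> ell a + s * (c - a) <= ell c.

Lemma three_slope (ell : R -> R) y a c : convex_on (-1) 1 ell ->
  -1 <= y -> y < a -> a < c -> c <= 1 ->
  (ell a - ell y) / (a - y) <= (ell c - ell a) / (c - a).
Proof.
move=> hc hy hya hac hc1.
have hcy : 0 < c - y by lra.
have hay : 0 < a - y by lra.
have hca : 0 < c - a by lra.
set t := (c - a) / (c - y).
have ht : a = t * y + (1 - t) * c.
  rewrite /t; field; lra.
have t0 : 0 <= t by rewrite /t divr_ge0 // ltW.
have t1 : t <= 1 by rewrite /t ler_pdivrMr // mul1r; lra.
have := hc y c t; rewrite -ht => H.
have {}H := H ltac:(lra) ltac:(lra) ltac:(lra).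
have H2 : (c - y) * ell a <= (c - a) * ell y + (a - y) * ell c.
  have e1 : c - a = t * (c - y) by rewrite /t mulfVK // gt_eqF.
  have e2 : a - y = (1 - t) * (c - y) by rewrite mulrBl mul1r -e1; lra.
  rewrite e1 e2 -mulrA -mulrA [_ * ell y]mulrC [_ * ell c]mulrC !mulrA -mulrDl.
  by rewrite [_ * ell a]mulrC ler_wpM2r // ltW.
rewrite ler_pdivrMr // mulrAC ler_pdivlMr //.
have key : (ell c - ell a) * (a - y) - (ell a - ell y) * (c - a)
   = (c - a) * ell y + (a - y) * ell c - (c - y) * ell a by ring.
by rewrite -subr_ge0 key subr_ge0.
Qed.

Lemma lip_L_ge0 (ell : R -> R) L : lipschitz_on (-1) 1 L ell -> 0 <= L.
Proof.
move=> hl; have := hl 1 (-1) ltac:(lra) ltac:(lra).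
have -> : 1 - (-1) = 2 :> R by ring.
rewrite (@ger0_norm _ 2); last by lra.
move=> h; have := normr_ge0 (ell 1 - ell (-1)); lra.
Qed.

Lemma subg_ex (ell : R -> R) L a : convex_on (-1) 1 ell -> lipschitz_on (-1) 1 L ell ->
  -1 <= a <= 1 -> exists s, subg ell L a s.
Proof.
move=> hc hl /andP[ha1 ha2].
have L0 := lip_L_ge0 hl.
have [ea|lta] := eqVneq a (-1).
  exists (- L); split; first by rewrite normrN ger0_norm.
  move=> c /andP[c1 c2]; have := hl c a ltac:(lra) ltac:(lra).
  rewrite (@ger0_norm _ (c - a)); last by lra.
  rewrite ler_norml => /andP[h _].
  have -> : - L * (c - a) = - (L * (c - a)) by ring.
  lra.
have {}lta : -1 < a by rewrite lt_neqAle eq_sym lta.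
pose S := [set z | exists y, -1 <= y < a /\ z = (ell a - ell y) / (a - y)]%classic.
have slope_b : forall y, -1 <= y < a -> `|(ell a - ell y) / (a - y)| <= L.
  move=> y /andP[y1 y2].
  have hay : 0 < a - y by lra.
  rewrite normrM normfV (gtr0_norm hay) ler_pdivrMr //.
  have := hl a y ltac:(lra) ltac:(lra).
  by rewrite (gtr0_norm hay).
have Sne : (S !=set0)%classic.
  by exists ((ell a - ell (-1)) / (a - (-1))); exists (-1); split => //; lra.
have SubL : ubound S L.
  move=> z [y [hy ->]]; have := slope_b y hy; rewrite ler_norml; lra.
have Shs : has_sup S by split => //; exists L.
exists (sup S); split.
  rewrite ler_norml; apply/andP; split; last exact: ge_sup.
  have h1 : S ((ell a - ell (-1)) / (a - (-1))) by exists (-1); split => //; lra.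
  have := sup_upper_bound Shs h1.
  have := slope_b (-1) ltac:(lra); rewrite ler_norml; lra.
move=> c /andP[c1 c2].
have [cla|] := ltP c a.
  have hS : S ((ell a - ell c) / (a - c)) by exists c; split => //; lra.
  have := sup_upper_bound Shs hS.
  have hac : 0 < a - c by lra.
  rewrite ler_pdivrMr // => h.
  have -> : sup S * (c - a) = - (sup S * (a - c)) by ring.
  lra.
rewrite le_eqVlt => /orP[/eqP ->|alc]; first by rewrite subrr mulr0 addr0.
have hca : 0 < c - a by lra.
have : sup S <= (ell c - ell a) / (c - a).
  apply: ge_sup => // z [y [/andP[y1 y2] ->]].
  by apply: three_slope.
rewrite ler_pdivlMr // => h; lra.
Qed.


Lemma conv_range K (p x : 'I_K -> R) : prob_vec p -> (forall j, 0 <= x j <= 1) ->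
  0 <= \sum_j p j * x j <= 1.
Proof.
move=> [p0 p1] hx; apply/andP; split.
  by apply: sumr_ge0 => j _; apply: mulr_ge0 => //; case/andP: (hx j).
rewrite -p1; apply: ler_sum => j _.
by rewrite ler_piMr //; case/andP: (hx j).
Qed.

Lemma expR_le_quad (y : R) : y <= 1/2 -> expR y <= 1 + y + 2 * y ^+ 2.
Proof.
move=> hy.
have h1 : 1 - y <= expR (- y) by have := expR_ge1Dx (- y); rewrite -[1 - y]/(1 + - y).
have hpos : 0 < 1 - y by lra.
have -> : expR y = (expR (- y))^-1 by rewrite expRN invrK.
apply: (@le_trans _ _ (1 - y)^-1).
  by rewrite lef_pV2 // posrE ?expR_gt0 //.
rewrite -[(1 - y)^-1]mul1r ler_pdivrMr //.
have : 0 <= y ^+ 2 * (1 - 2 * y) by apply: mulr_ge0; [exact: sqr_ge0 | lra].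
have -> : (1 + y + 2 * y ^+ 2) * (1 - y) = 1 + y ^+ 2 * (1 - 2 * y) by ring.
lra.
Qed.

Section Hedge.
Variables (K : nat) (eta : R) (sg : R -> R) (x : nat -> 'I_K -> R) (b : nat -> R).

Definition Wt (c : 'I_K -> R) := \sum_k expR (- (eta * c k)).
Definition pw (c : 'I_K -> R) j := expR (- (eta * c j)) / Wt c.

Fixpoint cum t : 'I_K -> R :=
  if t is t'.+1 then
    (fun j => cum t' j + sg (\sum_k pw (cum t') k * x t' k - b t') * x t' j)
  else (fun _ => 0).

Definition pt t := pw (cum t).
Definition gt t j := sg (\sum_k pt t k * x t k - b t) * x t j.

Lemma cumS t j : cum t.+1 j = cum t j + gt t j.
Proof. by []. Qed.

Lemma cum_sum T j : cum T j = \sum_(t < T) gt t j.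
Proof.
elim: T => [|T IH]; first by rewrite big_ord0.
by rewrite big_ord_recr /= -IH.
Qed.

Lemma Wt_gt0 c : (0 < K)%N -> 0 < Wt c.
Proof.
move=> K0; rewrite /Wt (bigD1 (Ordinal K0)) //=.
by rewrite ltr_pwDl ?expR_gt0 // sumr_ge0 // => k _; rewrite ltW ?expR_gt0.
Qed.

Lemma pw_prob c : (0 < K)%N -> prob_vec (pw c).
Proof.
move=> K0; have W0 := Wt_gt0 c K0; split.
  by move=> j; rewrite /pw divr_ge0 // ltW ?expR_gt0.
by rewrite /pw -mulr_suml divff // gt_eqF.
Qed.

Lemma step_bound (p g : 'I_K -> R) G : prob_vec p -> 0 <= eta ->
  (forall k, `|g k| <= G) -> eta * G <= 1/2 ->
  \sum_k p k * expR (- (eta * g k))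
    <= expR (- (eta * \sum_k p k * g k) + 2 * eta ^+ 2 * G ^+ 2).
Proof.
move=> [p0 p1] e0 hg heG.
apply: (@le_trans _ _ (1 + (- (eta * \sum_k p k * g k) + 2 * eta ^+ 2 * G ^+ 2))); last first.
  exact: expR_ge1Dx.
have -> : 1 + (- (eta * \sum_k p k * g k) + 2 * eta ^+ 2 * G ^+ 2)
  = \sum_k p k * (1 - eta * g k + 2 * eta ^+ 2 * G ^+ 2).
  rewrite mulr_sumr.
  under [RHS]eq_bigr do rewrite mulrDr mulrBr mulr1.
  rewrite big_split big_split /= sumrN p1 -mulr_suml p1 mul1r.
  rewrite addrA; congr (_ + _ + _); congr (- _); apply: eq_bigr => k _; ring.
apply: ler_sum => k _; apply: ler_wpM2l => //.
have hk := hg k.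
have hek : `|eta * g k| <= eta * G by rewrite normrM ger0_norm // ler_wpM2l.
have G0 : 0 <= G := le_trans (normr_ge0 _) hk.
apply: (le_trans (expR_le_quad _)).
  rewrite ler_norml in hek; lra.
have hsq : (- (eta * g k)) ^+ 2 <= eta ^+ 2 * G ^+ 2.
  rewrite sqrrN -exprMn -real_normK ?num_real // ler_sqr ?nnegrE ?mulr_ge0 //.
lra.
Qed.

Lemma W_bound T G : (0 < K)%N -> 0 <= eta -> eta * G <= 1/2 ->
  (forall t j, `|gt t j| <= G) ->
  Wt (cum T) <= K%:R * expR (- (eta * \sum_(t < T) \sum_k pt t k * gt t k)
                             + T%:R * (2 * eta ^+ 2 * G ^+ 2)).
Proof.
move=> K0 e0 heG hg; elim: T => [|T IH].
  rewrite big_ord0 mulr0 oppr0 mul0r addr0 expR0 mulr1 /Wt /=.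
  under eq_bigr do rewrite mulr0 oppr0 expR0.
  by rewrite sumr_const card_ord.
have eW : Wt (cum T.+1) = Wt (cum T) * \sum_k pt T k * expR (- (eta * gt T k)).
  rewrite /Wt mulr_sumr; apply: eq_bigr => k _.
  rewrite cumS /pt /pw /Wt mulrA mulrCA divff ?mulr1; last by rewrite gt_eqF // (Wt_gt0 _ K0).
  by rewrite mulrDr opprD expRD.
rewrite eW.
have W0 := Wt_gt0 (cum T) K0.
apply: (le_trans (ler_wpM2l (ltW W0) (step_bound (pw_prob (cum T) K0) e0 (hg T) heG))).
apply: (le_trans (ler_wpM2r (ltW (expR_gt0 _)) IH)).
rewrite -[K%:R * _ * _]mulrA -expRD big_ord_recr /= mulrDr opprD.
rewrite -[(T.+1)%:R]natr1 mulrDl mul1r.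
apply: ler_wpM2l; first by rewrite ler0n.
by rewrite ler_expR /pt; lra.
Qed.

Lemma hedge_regret T G j : (0 < K)%N -> 0 <= eta -> eta * G <= 1/2 ->
  (forall t j, `|gt t j| <= G) ->
  eta * (\sum_(t < T) \sum_k pt t k * gt t k - cum T j)
    <= ln K%:R + T%:R * (2 * eta ^+ 2 * G ^+ 2).
Proof.
move=> K0 e0 heG hg.
have h1 : expR (- (eta * cum T j)) <= Wt (cum T).
  rewrite /Wt (bigD1 j) //= lerDl sumr_ge0 // => k _; exact: ltW (expR_gt0 _).
have := le_trans h1 (W_bound T K0 e0 heG hg).
have K0' : 0 < K%:R :> R by rewrite ltr0n.
rewrite -{1}(lnK K0') -expRD ler_expR => h.
rewrite mulrBr; lra.
Qed.

End Hedge.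


Lemma regret_real (ell : R -> R) L K eta sg (x : nat -> 'I_K -> R) (b : nat -> R) T (q : 'I_K -> R) :
  (0 < K)%N -> (forall a, -1 <= a <= 1 -> subg ell L a (sg a)) ->
  (forall t j, 0 <= x t j <= 1) -> (forall t, 0 <= b t <= 1) -> prob_vec q ->
  0 <= eta -> eta * L <= 1/2 ->
  eta * (\sum_(t < T) ell (\sum_j pt eta sg x b t j * x t j - b t)
         - \sum_(t < T) ell (\sum_j q j * x t j - b t))
    <= ln K%:R + T%:R * (2 * eta ^+ 2 * L ^+ 2).
Proof.
move=> K0 hsg hx hb hq e0 heL.
have hP t := pw_prob eta (cum eta sg x b t) K0.
have ha t : -1 <= \sum_j pt eta sg x b t j * x t j - b t <= 1.
  have := conv_range (hP t) (hx t); have := hb t; lra.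
have hc t : -1 <= \sum_j q j * x t j - b t <= 1.
  have := conv_range hq (hx t); have := hb t; lra.
have hg t j : `|gt eta sg x b t j| <= L.
  rewrite /gt normrM; case: (hsg _ (ha t)) => hs _.
  rewrite -[L]mulr1; apply: ler_pM; [exact: normr_ge0 | exact: normr_ge0 | exact: hs | ].
  by rewrite ger0_norm; case/andP: (hx t j).
have step t : ell (\sum_j pt eta sg x b t j * x t j - b t) - ell (\sum_j q j * x t j - b t)
   <= \sum_k pt eta sg x b t k * gt eta sg x b t k - \sum_j q j * gt eta sg x b t j.
  case: (hsg _ (ha t)) => _ /(_ _ (hc t)).
  set s := sg _; set A := \sum_j _ * _; set B := \sum_j q j * x t j.
  have -> : \sum_k pt eta sg x b t k * gt eta sg x b t k - \sum_j q j * gt eta sg x b t j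
            = s * (A - B).
    rewrite mulrBr !mulr_sumr; congr (_ - _); apply: eq_bigr => j _;
      rewrite /gt -/s; ring.
  have -> : s * (B - b t - (A - b t)) = - (s * (A - B)) by ring.
  lra.
have H : \sum_(t < T) ell (\sum_j pt eta sg x b t j * x t j - b t)
         - \sum_(t < T) ell (\sum_j q j * x t j - b t)
   <= \sum_j q j * (\sum_(t < T) \sum_k pt eta sg x b t k * gt eta sg x b t k
                     - cum eta sg x b T j).
  rewrite -sumrB; apply: le_trans; first by apply: ler_sum => t _; exact: step.
  rewrite sumrB; under [X in _ <= X]eq_bigr do rewrite mulrBr.
  rewrite sumrB -mulr_suml (proj2 hq) mul1r lerD2l lerN2.
  rewrite [X in _ <= X]exchange_big /=; apply: ler_sum => j _; by rewrite cum_sum mulr_sumr.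
apply: (le_trans (ler_wpM2l e0 H)).
rewrite mulr_sumr.
apply: (@le_trans _ _ (\sum_j q j * (ln K%:R + T%:R * (2 * eta ^+ 2 * L ^+ 2)))).
  apply: ler_sum => j _; rewrite mulrCA; apply: ler_wpM2l; first by case: hq.
  exact: hedge_regret.
by rewrite -mulr_suml (proj2 hq) mul1r.
Qed.

Lemma trivial_regret (ell : R -> R) L K (p : nat -> 'I_K -> R) (x : nat -> 'I_K -> R) (b : nat -> R) T (q : 'I_K -> R) :
  lipschitz_on (-1) 1 L ell -> (forall t, prob_vec (p t)) ->
  (forall t j, 0 <= x t j <= 1) -> (forall t, 0 <= b t <= 1) -> prob_vec q ->
  \sum_(t < T) ell (\sum_j p t j * x t j - b t)
    - \sum_(t < T) ell (\sum_j q j * x t j - b t) <= T%:R * L.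
Proof.
move=> hl hp hx hb hq.
have L0 := lip_L_ge0 hl.
rewrite -sumrB.
apply: (@le_trans _ _ (\sum_(t < T) L)); last by rewrite sumr_const card_ord mulr_natl.
apply: ler_sum => t _.
have := conv_range (hp t) (hx t); have := conv_range hq (hx t); have := hb t.
set A := \sum_j p t j * x t j; set B := \sum_j q j * x t j => hbt hB hA.
have := hl (A - b t) (B - b t) ltac:(lra) ltac:(lra).
have : `|A - b t - (B - b t)| <= 1 by rewrite ler_norml; lra.
move=> h1 h2.
have h3 : L * `|A - b t - (B - b t)| <= L * 1 by apply: ler_wpM2l.
have := ler_norm (ell (A - b t) - ell (B - b t)); lra.
Qed.

Lemma cum_causal K eta sg (x x' : nat -> 'I_K -> R) b b' t :
  (forall s, (s < t)%N -> x s = x' s /\ b s = b' s) ->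
  cum eta sg x b t = cum eta sg x' b' t.
Proof.
elim: t => [//|t IH] h /=.
rewrite IH => [|s hs]; last by apply: h; apply: ltnW.
by case: (h t (ltnSn t)) => -> ->.
Qed.

End O.

Unset Implicit Arguments.

Theorem corollary3p6 (R : realType) :
  exists c : R, 0 < c /\
  forall (n K : nat)
         (Ns : 'I_K -> 'M[R[i]]_(2 ^ n) -> 'M[R[i]]_(2 ^ n))
         (ell : R -> R) (L : R),
    (0 < K)%N ->
    (forall j, is_channel (Ns j)) ->
    convex_on (-1) 1 ell ->
    lipschitz_on (-1) 1 L ell ->
    forall T : nat,
    exists strat : nat -> (nat -> 'M[R[i]]_(2 ^ n * 2 ^ n)) -> (nat -> R) -> 'I_K -> R,
      (* the output in round t depends only on past information (rounds s < t) *)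
      (forall (t : nat) (E E' : nat -> 'M[R[i]]_(2 ^ n * 2 ^ n)) (b b' : nat -> R),
          (forall s, (s < t)%N -> E s = E' s /\ b s = b' s) ->
          strat t E b =1 strat t E' b') /\
      (* it outputs probability vectors *)
      (forall t E b, prob_vec (strat t E b)) /\
      (* regret bound against every channel in the convex hull *)
      (forall (E : nat -> 'M[R[i]]_(2 ^ n * 2 ^ n)) (b : nat -> R),
          (forall t, test_operator (E t)) ->
          (forall t, 0 <= b t <= 1) ->
          forall q : 'I_K -> R, prob_vec q ->
          let Nt := fun t => \sum_(j < K) real_complex R (strat t E b j) *: choi (Ns j) in
          let Nhull := fun X => \sum_(j < K) real_complex R (q j) *: Ns j X in
          \sum_(t < T) ell (rtr_prod (E t) (Nt t) - b t)
            - \sum_(t < T) ell (rtr_prod (E t) (choi Nhull) - b t)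
          <= c * L * Num.sqrt (T%:R * ln (K%:R : R))).
Proof.
exists 3; split; first by lra.
move=> n K Ns ell L K0 hch hconv hlip T.
pose xo (E : nat -> 'M[R[i]]_(2 ^ n * 2 ^ n)) t (j : 'I_K) := rtr_prod (E t) (choi (Ns j)).
pose sg a := epsilon (inhabits (0 : R)) (fun s => -1 <= a <= 1 -> subg ell L a s).
have hsg : forall a, -1 <= a <= 1 -> subg ell L a (sg a).
  move=> a ha; rewrite /sg; apply: (epsilon_spec (inhabits (0 : R))
     (fun s => -1 <= a <= 1 -> subg ell L a s)) => //.
  have [s hs] := subg_ex hconv hlip ha; by exists s.
set r := Num.sqrt (T%:R * ln (K%:R : R)).
pose eta := r / (2 * L * T%:R).
exists (fun t E b => pt eta sg (xo E) b t).
split.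
  move=> t E E' b b' h j; rewrite /pt.
  rewrite (@cum_causal R K eta sg (xo E) (xo E') b b' t) //.
  by move=> s hs; case: (h s hs) => e1 e2; rewrite /xo e1 e2.
split; first by move=> t E b; apply: pw_prob.
move=> E b hE hb q hq /=.
rewrite choi_lin.
under eq_bigr do rewrite rtr_lin.
under [X in _ - X <= _]eq_bigr do rewrite rtr_lin.
have hx : forall t j, 0 <= xo E t j <= 1.
  by move=> t j; apply: range_test.
rewrite -/(xo E).
have L0 := lip_L_ge0 hlip.
have r0 : 0 <= r by apply: sqrtr_ge0.
have [K1|K2] := eqVneq K 1%N.
  subst K.
  have eq1 : forall (p : 'I_1 -> R), prob_vec p -> p = fun _ => 1.
    move=> p [_ hp]; apply: funext => j; rewrite ord1; move: hp; by rewrite big_ord1.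
  set G := \sum_(t < T) _.
  have -> : G = \sum_(t < T) ell (\sum_j q j * rtr_prod (E t) (choi (Ns j)) - b t).
    rewrite /G; apply: eq_bigr => t _.
    by rewrite /pt (eq1 _ (pw_prob _ _ K0)) (eq1 _ hq).
  by rewrite subrr; apply: mulr_ge0 => //; apply: mulr_ge0 => //; lra.
have K2' : (1 < K)%N by rewrite ltn_neqAle eq_sym K2 K0.
have lnK : 0 < ln (K%:R : R) by apply: ln_gt0; rewrite ltr1n.
have [/orP hcase|hcase] := boolP ((L == 0) || (T%:R <= r)).
  have HT := @trivial_regret R ell L K (fun t => pt eta sg (xo E) b t) (xo E) b T q hlip (fun t => pw_prob _ _ K0) hx hb hq.
  apply: (le_trans HT).
  case: hcase => [/eqP -> |hT]; first by rewrite !(mulr0, mul0r).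
  have : T%:R * L <= r * L by apply: ler_wpM2r.
  have : 0 <= r * L by apply: mulr_ge0.
  rewrite [3 * L * r]mulrAC; lra.
move: hcase; rewrite negb_or -ltNge => /andP[LN0 hrT].
have Lp : 0 < L by rewrite lt_neqAle eq_sym LN0.
have Tp : 0 < T%:R :> R by apply: le_lt_trans hrT.
have rp : 0 < r by rewrite sqrtr_gt0 mulr_gt0.
have hr2 : r ^+ 2 = T%:R * ln (K%:R : R) by rewrite sqr_sqrtr // mulr_ge0 // ltW.
have ep : 0 < eta by rewrite /eta divr_gt0 // !mulr_gt0.
have heL : eta * L <= 1 / 2.
  have -> : eta * L = r / (2 * T%:R).
    by rewrite /eta; field; rewrite ?gt_eqF //; apply/andP; split; rewrite gt_eqF.
  rewrite ler_pdivrMr ?mulr_gt0 //; lra.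
have H := @regret_real R ell L K eta sg (xo E) b T q K0 hsg hx hb hq (ltW ep) heL.
have eln : ln (K%:R : R) = r ^+ 2 / T%:R by rewrite hr2; field; rewrite gt_eqF.
have key : ln (K%:R : R) + T%:R * (2 * eta ^+ 2 * L ^+ 2) = eta * (3 * L * r).
  rewrite eln /eta; field; rewrite ?gt_eqF //.
rewrite key in H.
by rewrite -(ler_pM2l ep).
Qed.
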